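(* Let $n\ge3$, $i\ge0$, $1\le k\le n$, and suppose $\mathcal{L}_i\cap\mathcal{B}_k\neq\emptyset$. Then $\mathcal{L}_i\cap\mathcal{B}_k$ contains at most one element of the form $x_1^t\partial_k$ (with $t\ge0$ an integer). If it contains such an element, then this element is the unique element of minimum weight-degree $\mathrm{WD}$ in $\mathcal{L}_i\cap\mathcal{B}_k$, and its exponent is $t=i-h_i(n-k)+1$.
   Context: Fix an integer $n\ge 3$. A partition is a sequence $\Lambda=(\lambda_j)_{j\ge1}$ of non-negative integers with finite support; $\mathrm{wt}(\Lambda)=\sum_j j\lambda_j$; $\mathrm{Part}(k)$ is the set of partitions with $\lambda_j=0$ for $j>k$. Write $x^\Lambda=\prod_j x_j^{\lambda_j}$, $\deg(x^\Lambda)=\sum_j\lambda_j$. $\mathcal{B}=\{x^\Lambda\partial_k : 1\le k\le n,\ \Lambda\in\mathrm{Part}(k-1)\}$ and $\mathcal{B}_u=\{x^\Lambda\partial_k\in\mathcal{B}: k=u\}$. For an integer $i\ge-1$, let $r_i\in\{1,\dots,n-1\}$ with $i\equiv r_i\pmod{n-1}$ and $h_i=\lfloor (i-1)/(n-1)\rfloor+1$. The weight-degree is $\mathrm{WD}(x^\Lambda\partial_k)=\mathrm{wt}(\Lambda)-\deg(x^\Lambda)+n-k$, and $\mathrm{lev}_i(x^\Lambda\partial_k)=h_i\,\mathrm{WD}(x^\Lambda\partial_k)+\deg(x^\Lambda)-1$. For $i\ge-1$, $\mathcal{N}_i=\{b\in\mathcal{B}: \mathrm{lev}_j(b)\le j\text{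 for some integer } -1\le j\le i\}$, and $\mathcal{L}_i=\mathcal{N}_i\setminus\mathcal{N}_{i-1}$ for $i\ge0$. *)

(* Defs.v *)
From mathcomp Require Import all_boot all_order all_algebra.
Set Implicit Arguments. Unset Strict Implicit. Unset Printing Implicit Defensive.
Import Order.TTheory GRing.Theory Num.Theory.
Local Open Scope ring_scope.

(* An element x^Lambda d_k of B with Lambda in Part(k-1) is encoded by the
   index k together with the list s = [:: lambda_1; ...; lambda_(k-1)]
   (of size k-1): lambda_j = nth 0 s (j-1), and lambda_j = 0 for j > k-1. *)

Definition wt (s : seq nat) : nat :=
  (\sum_(j < size s) j.+1 * nth 0 s j)%N.

Definition deg (s : seq nat) : nat := sumn s.

Definition inB (n k : nat) (s : seq nat) : bool :=
  [&& (1 <= k)%N, (k <= n)%N & size s == k.-1].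

Definition is_x1pow (s : seq nat) (t : nat) : Prop :=
  forall j : nat, nth 0 s j = (if j == 0%N then t else 0%N).

Definition hh (n : nat) (i : int) : int :=
  ((i - 1) %/ (n.-1)%:Z)%Z + 1.

Definition WD (n k : nat) (s : seq nat) : int :=
  (wt s)%:Z - (deg s)%:Z + n%:Z - k%:Z.

Definition lev (n : nat) (i : int) (k : nat) (s : seq nat) : int :=
  hh n i * WD n k s + (deg s)%:Z - 1.

Definition inN (n : nat) (i : int) (k : nat) (s : seq nat) : Prop :=
  inB n k s /\ exists j : int, -1 <= j /\ j <= i /\ lev n j k s <= j.

Definition inL (n : nat) (i : int) (k : nat) (s : seq nat) : Prop :=
  inN n i k s /\ ~ inN n (i - 1) k s.

(* Main.v *)
Require Import Defs.
From mathcomp Require Import all_boot all_order all_algebra.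
From mathcomp Require Import zify.
Import Order.TTheory GRing.Theory Num.Theory.
Local Open Scope ring_scope.

Lemma deg_big (s : seq nat) : deg s = (\sum_(j < size s) nth 0 s j)%N.
Proof.
elim: s => [|x s IH]; first by rewrite /deg big_ord0.
by rewrite /deg /= big_ord_recl /= -IH.
Qed.

Lemma wt_split (s : seq nat) :
  wt s = (deg s + \sum_(j < size s) j * nth 0 s j)%N.
Proof.
rewrite /wt deg_big -big_split /=; apply: eq_bigr => j _; by rewrite mulSn.
Qed.

Lemma x1pow_wd (s : seq nat) t : is_x1pow s t -> wt s = t /\ deg s = t.
Proof.
move=> H.
have E : (\sum_(j < size s) j * nth 0 s j)%N = 0%N.
  apply: big1 => j _; rewrite H; case: eqP => [->|_]; by rewrite ?mul0n ?muln0.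
have D : deg s = t.
  rewrite deg_big; case: s H E => [|x s] H E.
    by rewrite big_ord0; move: (H 0%N).
  rewrite big_ord_recl /= big1 ?addn0; first by move: (H 0%N).
  move=> j _; by move: (H (bump 0 j)).
by rewrite wt_split E addn0 D.
Qed.

Lemma x1pow_eq (s1 s2 : seq nat) t :
  size s1 = size s2 -> is_x1pow s1 t -> is_x1pow s2 t -> s1 = s2.
Proof.
move=> Hs H1 H2; apply: (eq_from_nth (x0 := 0%N) Hs) => j _.
by rewrite H1 H2.
Qed.

Lemma hh_mono n (a b : int) : (2 <= n.-1)%N -> a <= b -> hh n a <= hh n b.
Proof.
move=> Hn Hab; rewrite /hh lerD2r lez_divRL; last by rewrite ltz_nat; lia.
apply: le_trans (lez_floor _ _) _; first by rewrite eqz_nat; lia.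
by rewrite lerD2r.
Qed.

Lemma lev_x1 n j k s t : is_x1pow s t ->
  lev n j k s = hh n j * (n%:Z - k%:Z) + t%:Z - 1.
Proof.
move=> /x1pow_wd [W D]; rewrite /lev /WD W D; congr (_ * _ + _ - _); lia.
Qed.

Lemma WD_x1 n k s t : is_x1pow s t -> WD n k s = n%:Z - k%:Z.
Proof. move=> /x1pow_wd [W D]; rewrite /WD W D; lia. Qed.

Lemma t_formula n i k s t : (3 <= n)%N -> (k <= n)%N ->
  inL n i%:Z k s -> is_x1pow s t ->
  t%:Z = i%:Z - hh n i%:Z * (n%:Z - k%:Z) + 1.
Proof.
move=> Hn Hk [[HB [j [Hj1 [Hj2 Hl]]]] HN] Hx.
have Hm : hh n (i%:Z - 1) <= hh n i%:Z by apply: (hh_mono n); lia.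
have Hnk : 0 <= n%:Z - k%:Z by lia.
have Ej : j = i%:Z.
  apply/eqP; rewrite eq_le Hj2 /=; rewrite leNgt; apply/negP => Hlt.
  apply: HN; split => //; exists j; split => //; split => //; lia.
subst j.
have L1 : hh n i%:Z * (n%:Z - k%:Z) + t%:Z - 1 <= i%:Z.
  by rewrite (lev_x1 _ _ _ _ _ Hx) in Hl.
have L2 : ~ (hh n (i%:Z - 1) * (n%:Z - k%:Z) + t%:Z - 1 <= i%:Z - 1).
  move=> C; apply: HN; split => //; exists (i%:Z - 1); split; first lia.
  split; first lia. by rewrite (lev_x1 _ _ _ _ _ Hx).
have : hh n (i%:Z - 1) * (n%:Z - k%:Z) <= hh n i%:Z * (n%:Z - k%:Z) by rewrite ler_wpM2r.
lia.
Qed.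

Theorem proposition2p14 (n i k : nat) :
  (3 <= n)%N -> (1 <= k)%N -> (k <= n)%N ->
  (exists s, inL n i%:Z k s /\ inB n k s) ->
  (forall s1 s2 t1 t2,
      inL n i%:Z k s1 -> inB n k s1 -> is_x1pow s1 t1 ->
      inL n i%:Z k s2 -> inB n k s2 -> is_x1pow s2 t2 -> s1 = s2) /\
  (forall s t, inL n i%:Z k s -> inB n k s -> is_x1pow s t ->
      (forall s', inL n i%:Z k s' -> inB n k s' -> s' <> s ->
          WD n k s < WD n k s') /\
      t%:Z = i%:Z - hh n i%:Z * (n%:Z - k%:Z) + 1).
Proof.
move=> Hn Hk1 Hkn _.
have U : forall s1 s2 t1 t2,
      inL n i%:Z k s1 -> inB n k s1 -> is_x1pow s1 t1 ->
      inL n i%:Z k s2 -> inB n k s2 -> is_x1pow s2 t2 -> s1 = s2.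
  move=> s1 s2 t1 t2 L1 B1 X1 L2 B2 X2.
  have T1 := t_formula _ _ _ _ _ Hn Hkn L1 X1; have T2 := t_formula _ _ _ _ _ Hn Hkn L2 X2.
  have E : t1 = t2 by apply/eqP; rewrite -eqz_nat T1 T2.
  subst t2; apply: (x1pow_eq _ _ _ _ X1 X2).
  by move: B1 B2; rewrite /inB => /and3P [_ _ /eqP ->] /and3P [_ _ /eqP ->].
split=> // s t L B X; split; last exact: t_formula _ _ _ _ _ Hn Hkn L X.
move=> s' L' B' Hne.
rewrite (WD_x1 _ _ _ _ X) /WD wt_split.
case: (boolP [exists j : 'I_(size s'), (0 < j)%N && (0 < nth 0 s' j)%N]).
  move=> /existsP [j /andP [Hj1 Hj2]].
  have : (0 < \sum_(j < size s') j * nth 0 s' j)%N.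
    rewrite (bigD1 j) //=; have : (0 < j * nth 0 s' j)%N by rewrite muln_gt0 Hj1.
    lia.
  lia.
move=> /existsPn Hall; exfalso; apply: Hne.
apply: (U s' s (nth 0 s' 0) t) => //.
move=> j; case: ifP => [/eqP -> //|/negbT Hj].
case: (ltnP j (size s')) => Hs; last by rewrite nth_default.
move: (Hall (Ordinal Hs)) => /=; rewrite lt0n Hj /= lt0n negbK => /eqP //.
Qed.
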